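(* Let $(V,A,\succ)$ be an election, $\mathcal{I}$ a probability distribution on $[0,1]$, and let $(x,y,p)$ be a LEO with income distribution $\mathcal{I}$ and total budget $B=1$. Then $\sum_{a\in A}y_a=1$ and $x_{v,a}=y_a$ for all $a\in A$ and $v\in V$.
   Context: An election $(V,A,\succ)$: finite nonempty voter set $V$, finite candidate set $A$, strict linear order $\succ_v$ on $A$ per voter. Extend $\succ_v$ to $A\cup\{\emptyset\}$ with $\emptyset$ strictly below all candidates. Given prices $p_v\in[0,1]^{A\cup\{\emptyset\}}$ with $p_{v,\emptyset}=0$ and income $b\ge0$, voter $v$'s demand is the $\succ_v$-maximal element of $\{a\in A\cup\{\emptyset\}: p_{v,a}\le b\}$; the random demand $\mathcal{D}_v(p_v,\mathcal{I})$ is this demand with $b\sim\mathcal{I}$. A LEO $(x,y,p)$ with income $\mathcal{I}$ and budget $B>0$ consists of prices $p_v\in[0,1]^{A\cup\{\emptyset\}}$ with $p_{v,\emptyset}=0$ and consumptions $x_v\in[0,1]^{A\cup\{\emptyset\}}$ for each $v\in V$, and $y\in[0,B]^A$, such that: (1) $x_{v,a}=\Pr[\mathcal{D}_v(p_v,\mathcal{I})=a]$ for all $a\in A\cup\{\emptyset\}$; (2) for each $a\in A$, $x_{v,a}\le y_a$, and if $x_{v,a}<y_a$ then $p_{v,a}=0$; (3) $y$ maximizes $\sum_{a\in A}\big(\sum_{v\in V}p_{v,a}\big)z_a$ over $z\in\mathbb{R}_{\ge0}^A$ with $\sum_a z_a=B$. *)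

(* Defs.v *)
From HB Require Import structures.
From mathcomp Require Import all_boot all_order all_algebra.
From mathcomp Require Import all_classical all_reals all_analysis.
Set Implicit Arguments. Unset Strict Implicit. Unset Printing Implicit Defensive.
Import Order.TTheory GRing.Theory Num.Theory.
Local Open Scope ring_scope.
Local Open Scope classical_set_scope.

Definition strict_linear_order (A : eqType) (r : rel A) : Prop :=
  [/\ (forall a, ~~ r a a),
      (forall a b c, r a b -> r b c -> r a c) &
      (forall a b, a != b -> r a b \/ r b a)].

(* Extension of ≻ to A ∪ {∅}, with ∅ represented by [None], strictly below
   every candidate. *)
Definition pref_opt (A : Type) (r : rel A) : rel (option A) :=
  fun a b => match a, b with
             | Some a, Some b => r a b
             | Some _, None => true
             | _, _ => false
             end.

Definition is_demand (R : realType) (A : eqType) (r : rel A)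
    (pv : option A -> R) (b : R) (d : option A) : Prop :=
  pv d <= b /\ (forall a, pv a <= b -> a != d -> pref_opt r d a).

Definition is_LEO (R : realType) (V A : finType) (pref : V -> rel A)
    (P : probability R R) (B : R)
    (x : V -> option A -> R) (y : A -> R) (p : V -> option A -> R) : Prop :=
  (forall v a, 0 <= p v a <= 1) /\ (forall v, p v None = 0) /\
  (forall v a, 0 <= x v a <= 1) /\ (forall a, 0 <= y a <= B) /\
  (forall v a, (x v a)%:E = P [set b | is_demand (pref v) (p v) b a]) /\
  (forall v a, x v (Some a) <= y a /\
     (x v (Some a) < y a -> p v (Some a) = 0)) /\
  ((\sum_(a : A) y a = B) /\
   forall z : A -> R, (forall a, 0 <= z a) -> \sum_(a : A) z a = B ->
     \sum_(a : A) (\sum_(v : V) p v (Some a)) * z a <=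
     \sum_(a : A) (\sum_(v : V) p v (Some a)) * y a).

(* Main.v *)
Require Import Defs.
From HB Require Import structures.
From mathcomp Require Import all_boot all_order all_algebra.
From mathcomp Require Import all_classical all_reals all_analysis.
Import Order.TTheory GRing.Theory Num.Theory.
Local Open Scope ring_scope.
Local Open Scope classical_set_scope.

Section Aux.
Variables (A : finType) (r : rel A).

Lemma po_trans (hr : strict_linear_order r) a b c : pref_opt r a b -> pref_opt r b c -> pref_opt r a c.
Proof.
case: hr => _ tr _.
by case: a => [a|] //; case: b => [b|] //; case: c => [c|] //=; apply: tr.
Qed.

Lemma po_total (hr : strict_linear_order r) a b : a != b -> pref_opt r a b \/ pref_opt r b a.
Proof.
case: hr => _ _ tot.
case: a => [a|]; case: b => [b|] //=; try by [left|right].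
by move=> ab; apply: tot.
Qed.

Lemma po_max (hr : strict_linear_order r) (s : seq (option A)) : s != [::] ->
  exists d, d \in s /\ forall a, a \in s -> a != d -> pref_opt r d a.
Proof.
elim: s => [//|x t IH] _.
case: t IH => [|y t] IH.
  exists x; split; first by rewrite mem_head.
  by move=> a; rewrite inE => /eqP ->; rewrite eqxx.
have [d [dt dmax]] := IH isT.
have [xd|xd] := eqVneq x d.
  exists d; split; first by rewrite inE dt orbT.
  by move=> a; rewrite inE => /orP [/eqP ->|]; [rewrite xd eqxx| apply: dmax].
case: (po_total hr _ _ xd) => h.
- exists x; split; first by rewrite mem_head.
  move=> a; rewrite inE => /orP [/eqP ->|at0]; first by rewrite eqxx.
  move=> _; have [ad|ad] := eqVneq a d; first by rewrite ad.
  exact: po_trans hr _ _ _ h (dmax a at0 ad).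
- exists d; split; first by rewrite inE dt orbT.
  move=> a; rewrite inE => /orP [/eqP ->|]; first by move=> _.
  exact: dmax.
Qed.
End Aux.

Lemma demand_exists (R : realType) (A : finType) (r : rel A)
  (pv : option A -> R) (b : R) :
  strict_linear_order r -> pv None <= b -> exists d, is_demand r pv b d.
Proof.
move=> hr h0.
have ne : [seq d <- index_enum (option A) | pv d <= b] != [::].
  apply/eqP => E.
  have : None \in [seq d <- index_enum (option A) | pv d <= b].
    by rewrite mem_filter h0 mem_index_enum.
  by rewrite E.
have [d [dm dmax]] := (@po_max _ _ hr _ ne).
exists d; split.
  by move: dm; rewrite mem_filter => /andP [].
move=> a ha; apply: dmax.
by rewrite mem_filter ha mem_index_enum.
Qed.

Lemma demand_meas (R : realType) (A : finType) (r : rel A)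
  (pv : option A -> R) d :
  measurable [set b : R | is_demand r pv b d].
Proof.
have -> : [set b : R | is_demand r pv b d] =
  [set b | pv d <= b] `&` \bigcap_(a in [set: option A])
     (if (a != d) ==> pref_opt r d a then setT else [set b | b < pv a]).
  apply/seteqP; split => b.
  - move=> [h1 h2]; split => // a _.
    case: ifP => // /negbT; rewrite negb_imply => /andP [ad nd].
    rewrite /= ltNge; apply/negP => hab.
    by move: nd; rewrite (h2 a hab ad).
  - move=> [h1 h2]; split => // a hab ad.
    move: (h2 a I); case: ifP; first by rewrite ad.
    by move=> _ /=; rewrite ltNge hab.
apply: measurableI.
  rewrite -set_itvcy; exact: measurable_itv.
apply: fin_bigcap_measurable; first exact: finite_finset.
move=> a _; case: ifP => _; first exact: measurableT.
rewrite -set_itvNyo; exact: measurable_itv.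
Qed.

Lemma measure_bigU_le (R : realType) (P : probability R R) (I : Type)
  (s : seq I) (F : I -> set R) :
  (forall i, measurable (F i)) ->
  (P (\big[setU/set0]_(i <- s) F i) <= \sum_(i <- s) P (F i))%E.
Proof.
move=> mF; elim: s => [|i s IH].
  by rewrite !big_nil measure0.
rewrite !big_cons.
apply: le_trans (measureU2 _ _ _) _ => //.
  exact: bigsetU_measurable.
exact: leeD.
Qed.

Lemma in_bigU (T I : eqType) (s : seq I) (F : I -> set T) c z :
  c \in s -> F c z -> (\big[setU/set0]_(i <- s) F i) z.
Proof.
elim: s => [//|i s IH]; rewrite inE big_cons => /orP [/eqP <- h|h h'].
  by left.
by right; apply: IH.
Qed.

Theorem mainTheorem7 (R : realType) (V A : finType) (pref : V -> rel A)
    (P : probability R R)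
    (x : V -> option A -> R) (y : A -> R) (p : V -> option A -> R) :
  (0 < #|V|)%N ->
  (forall v, strict_linear_order (pref v)) ->
  P `[0%R, 1%R] = 1%E ->
  is_LEO pref P 1 x y p ->
  \sum_(a : A) y a = 1 /\ (forall (a : A) (v : V), x v (Some a) = y a).
Proof.
move=> _ hlin hP [hp [hp0 [hx [hy [hdist [h2 [hsum _]]]]]]].
split => // a v.
have [le1 impl] := h2 v a.
case: (ltP (x v (Some a)) (y a)) => hlt; last by apply/eqP; rewrite eq_le le1.
have pa0 := impl hlt.
exfalso.
pose D c := [set b : R | is_demand (pref v) (p v) b (Some c)].
have cover : `[0%R, 1%R] `<=` \big[setU/set0]_(c <- index_enum A) D c.
  move=> b; rewrite /= in_itv /= => /andP [b0 _].
  have [d hd] := @demand_exists _ _ _ (p v) b (hlin v) ltac:(by rewrite hp0).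

  case: d hd => [c|] hd.
    apply: (in_bigU _ _ _ _ c) => //; exact: mem_index_enum.
  case: hd => _ /(_ (Some a)); rewrite pa0 => /(_ b0 isT) //.
have h1 : (1 <= \sum_(c <- index_enum A) P (D c))%E.
  have mD : forall c, measurable (D c) by move=> c; exact: demand_meas.
  rewrite -hP; apply: (le_trans _ (measure_bigU_le _ P _ (index_enum A) D mD)).
  refine (@le_measure _ _ _ P _ _ _ _ _); rewrite ?inE.
  - exact: measurable_itv.
  - exact: (@bigsetU_measurable _ _ _ _ _ D (fun c _ => mD c)).
  - exact: cover.
have h3 : \sum_(c : A) x v (Some c) < \sum_(c : A) y c.
  rewrite (bigD1 a) //= [X in _ < X](bigD1 a) //=.
  apply: ltr_leD => //; apply: ler_sum => c _; exact: (h2 v c).1.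
move: h1; under eq_bigr => c _ do rewrite -hdist.
rewrite sumEFin lee_fin => h1.
by move: h3; rewrite hsum; apply/negP; rewrite -leNgt.
Qed.
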